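(* Let $(X,\rho,\mu)$ be a $K$-doubling metric measure space and $x\in X$. The following are equivalent: (i) $x$ is an isolated point of $X$ for the metric topology of $\rho$; (ii) $x$ is an isolated point of $X$ for the $\mu$-topology; (iii) $\mu(\{x\})>0$.
   Context: A $K$-doubling metric measure space ($K>0$) is a triple $(X,\rho,\mu)$ where $(X,\rho)$ is a complete separable metric space and $\mu$ is a Borel-regular outer measure on $X$ with $0<\mu(B_{2r}(x))\le K\mu(B_r(x))<+\infty$ for all $x\in X$, $r>0$. A point $x\in E\subseteq X$ is a $\mu$-interior point of $E$ if there is a Borel set $B\subseteq E$ with $\lim_{r\to0^+}\mu(B_r(x)\setminus B)/\mu(B_r(x))=0$; in that case $E$ is called a $\mu$-neighborhood of $x$. The $\mu$-topology is the topology on $X$ whose open sets are the sets that are $\mu$-neighborhoods of each of their points. A point $x$ is $\mu$-isolated if $\{x\}$ is a $\mu$-neighborhood of $x$. *)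

(* Defs.v *)
From HB Require Import structures.
From mathcomp Require Import all_boot all_order all_algebra.
From mathcomp Require Import all_classical all_reals all_analysis.
Set Implicit Arguments. Unset Strict Implicit. Unset Printing Implicit Defensive.
Import Order.TTheory GRing.Theory Num.Theory.
Import numFieldNormedType.Exports.
Local Open Scope classical_set_scope.
Local Open Scope ring_scope.

Section MMS.
Variables (R : realType) (X : Type).

Definition is_metric (rho : X -> X -> R) : Prop :=
  [/\ forall x y, 0 <= rho x y,
      forall x y, rho x y = 0 <-> x = y,
      forall x y, rho x y = rho y x &
      forall x y z, rho x z <= rho x y + rho y z].

Definition mball (rho : X -> X -> R) (x : X) (r : R) : set X :=
  [set y | rho x y < r].

Definition metric_complete (rho : X -> X -> R) : Prop :=
  forall u : nat -> X,
    (forall e : R, 0 < e -> exists N : nat, forall m n : nat,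
        (N <= m)%N -> (N <= n)%N -> rho (u m) (u n) < e) ->
    exists l : X, forall e : R, 0 < e -> exists N : nat, forall n : nat,
        (N <= n)%N -> rho (u n) l < e.

Definition metric_separable (rho : X -> X -> R) : Prop :=
  exists D : set X, countable D /\
    forall x (e : R), 0 < e -> exists2 d, D d & rho x d < e.

Definition metric_open (rho : X -> X -> R) (U : set X) : Prop :=
  forall x, U x -> exists2 r : R, 0 < r & mball rho x r `<=` U.

Definition metric_borel (rho : X -> X -> R) (B : set X) : Prop :=
  <<s metric_open rho >> B.

Definition borel_regular (rho : X -> X -> R)
  (mu : {outer_measure set X -> \bar R}) : Prop :=
  (forall B, metric_borel rho B -> mu.-caratheodory B) /\
  (forall A : set X, exists B, [/\ metric_borel rho B, A `<=` B & mu B = mu A]).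

Definition doubling_mms (rho : X -> X -> R)
  (mu : {outer_measure set X -> \bar R}) (K : R) : Prop :=
  [/\ 0 < K, is_metric rho, metric_complete rho, metric_separable rho &
      borel_regular rho mu] /\
      forall x (r : R), 0 < r ->
        [/\ (0 < mu (mball rho x r))%E,
            (mu (mball rho x (2 * r)) <= K%:E * mu (mball rho x r))%E &
            (mu (mball rho x r) < +oo)%E].

Definition mu_nbhd (rho : X -> X -> R) (mu : {outer_measure set X -> \bar R})
  (x : X) (E : set X) : Prop :=
  E x /\ exists B : set X, [/\ metric_borel rho B, B `<=` E &
    (fun r : R => fine (mu (mball rho x r `\` B)) / fine (mu (mball rho x r)))
      @ 0^'+ --> 0].

Definition mu_open (rho : X -> X -> R) (mu : {outer_measure set X -> \bar R})
  (E : set X) : Prop :=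
  forall x, E x -> mu_nbhd rho mu x E.

End MMS.

(* Main.v *)
Require Import Defs.
From HB Require Import structures.
From mathcomp Require Import all_boot all_order all_algebra.
From mathcomp Require Import all_classical all_reals all_analysis.
From mathcomp Require Import lra ring.
Import Order.TTheory GRing.Theory Num.Theory.
Local Open Scope classical_set_scope.
Local Open Scope ring_scope.

Lemma cont_above (R : realType) (T : pointedType) (mu : {outer_measure set T -> \bar R})
  (A : (set T)^nat) : (forall n, mu.-caratheodory (A n)) -> nonincreasing_seq A ->
  (mu (A 0%N) < +oo)%E -> mu \o A @ \oo --> mu (\bigcap_n A n).
Proof.
move=> mA nA A0.
have mA' : forall n, (mu.-cara.-measurable) (A n) by [].
apply: (@nonincreasing_cvg_mu _ (caratheodory_type mu) R mu A) => //.
exact: bigcapT_measurable.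
Qed.

Lemma cont_above' (R : realType) (X : Type) (x : X) (mu : {outer_measure set X -> \bar R})
  (A : (set X)^nat) : (forall n, mu.-caratheodory (A n)) -> nonincreasing_seq A ->
  (mu (A 0%N) < +oo)%E -> mu \o A @ \oo --> mu (\bigcap_n A n).
Proof.
move=> H1 H2 H3.
pose T : pointedType := HB.pack X (gen_eqMixin X) (gen_choiceMixin X) (isPointed.Build X x).
have := @cont_above R T mu A H1 H2 H3; exact.
Qed.

Lemma near_right_ex (R : realType) (P : R -> Prop) :
  (\forall t \near 0^'+, P t) -> exists2 d : R, 0 < d & forall t, 0 < t -> t < d -> P t.
Proof.
move=> [d /= d0 H]; exists d => // t t0 td; apply: H => //=.
by rewrite sub0r normrN gtr0_norm.
Qed.

Lemma ex_near_right (R : realType) (P : R -> Prop) (d : R) : 0 < d ->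
  (forall t, 0 < t -> t < d -> P t) -> \forall t \near 0^'+, P t.
Proof.
move=> d0 H; exists d => //= t /= + t0; rewrite sub0r normrN gtr0_norm //.
exact: H.
Qed.

Lemma finE (R : realType) (a : \bar R) : (0 <= a)%E -> (a < +oo)%E -> a = (fine a)%:E.
Proof. by move=> a0 aoo; rewrite fineK // ge0_fin_numE. Qed.

Section S.
Variables (R : realType) (X : Type) (rho : X -> X -> R).
Hypothesis hm : is_metric rho.

Lemma rho_ge0 x y : 0 <= rho x y. Proof. by case: hm. Qed.
Lemma rho_eq0 x y : rho x y = 0 <-> x = y. Proof. by case: hm. Qed.
Lemma rho_sym x y : rho x y = rho y x. Proof. by case: hm. Qed.
Lemma rho_tri x y z : rho x z <= rho x y + rho y z. Proof. by case: hm. Qed.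

Lemma rho_gt0 x y : x <> y -> 0 < rho x y.
Proof.
move=> xy; have := rho_ge0 x y; rewrite le_eqVlt => /orP[/eqP h|//].
by exfalso; apply: xy; apply/rho_eq0.
Qed.

Lemma rho_xx x : rho x x = 0. Proof. exact/rho_eq0. Qed.

Lemma mball_open x r : metric_open rho (mball rho x r).
Proof.
move=> y /= hy; exists (r - rho x y); first by rewrite subr_gt0.
move=> z /= hz; have := rho_tri x y z; rewrite /mball /= in hz hy * => ht; lra.
Qed.

Lemma open_borel U : metric_open rho U -> metric_borel rho U.
Proof. by move=> hU; apply: sub_gen_smallest. Qed.

Lemma single_borel x : metric_borel rho [set x].
Proof.
have ho : metric_open rho (~` [set x]).
  move=> y /= yx; exists (rho y x); first by apply: rho_gt0.
  by move=> z; rewrite /mball /= => hz zx; subst z; rewrite ltxx in hz.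
have [_ hC _] := smallest_sigma_algebra setT (metric_open rho).
have hb : metric_borel rho (~` [set x]) by apply: open_borel.
have := hC _ hb.
by rewrite setTD setCK.
Qed.

End S.

Theorem proposition2p2 (R : realType) (X : Type) (rho : X -> X -> R)
  (mu : {outer_measure set X -> \bar R}) (K : R)
  (hX : doubling_mms rho mu K) (x : X) :
  (metric_open rho [set x] <-> mu_open rho mu [set x]) /\
  (mu_open rho mu [set x] <-> (0 < mu [set x])%E).
Proof.
case: hX => [[K0 hm _ _ [hcar _]] hb].
have tri := @rho_tri R X rho hm.
have rgt0 := @rho_gt0 R X rho hm.
have rxx := @rho_xx R X rho hm.
have rsym := @rho_sym R X rho hm.
have mu0 := outer_measure_ge0 mu.
have muS := le_outer_measure mu.
pose mb z r := fine (mu (mball rho z r)).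
have mbE z r : 0 < r -> mu (mball rho z r) = (mb z r)%:E.
  by move=> r0; have [h1 _ h3] := hb z r r0; apply: finE => //; apply: ltW.
have mbpos z r : 0 < r -> 0 < mb z r.
  by move=> r0; have [h1 _ _] := hb z r r0; rewrite -lte_fin -mbE.
have mbdbl z r : 0 < r -> mb z (2 * r) <= K * mb z r.
  move=> r0; have [_ h2 _] := hb z r r0; rewrite -lee_fin EFinM -!mbE //.
  by rewrite mulr_gt0.
have xball r : 0 < r -> mball rho x r x by move=> r0; rewrite /mball /= rxx.
have muxfin : (mu [set x] < +oo)%E.
  apply: (@le_lt_trans _ _ (mu (mball rho x 1))).
    by apply: muS => y ->; apply: xball.
  by have [_ _ h] := hb x 1 ltr01.
have csing : mu.-caratheodory [set x] by apply: hcar; apply: single_borel.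
have key : forall e : R, 0 < e -> exists2 d : R, 0 < d &
    forall r, r <= d -> (mu (mball rho x r `\` [set x]) < e%:E)%E.
  move=> e e0.
  pose A n := mball rho x (n.+1%:R^-1) `\` [set x].
  have cA n : mu.-caratheodory (A n).
    apply: caratheodory_measurable_setD => //.
    by apply: hcar; apply: open_borel; apply: mball_open.
  have nA : nonincreasing_seq A.
    move=> n k nk; apply/subsetPset => y [hy yx]; split => //; move: hy; rewrite /mball /= => hy.
    by apply: lt_le_trans hy _; rewrite lef_pV2 ?posrE // ler_nat ltnS.
  have fA : (mu (A 0%N) < +oo)%E.
    apply: (@le_lt_trans _ _ (mu (mball rho x (0%N.+1%:R^-1)))).
      by apply: muS => y [].
    by rewrite mbE ?ltry // invr_gt0 ltr0n.
  have cv := @cont_above' R X x mu A cA nA fA.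
  have E0 : \bigcap_n A n = set0.
    apply/seteqP; split => // y hy.
    have [_ yx] := hy 0%N I.
    have [k hk] := ltr_add_invr (rgt0 x y (fun h => yx (esym h))).
    rewrite add0r in hk.
    have [hk' _] := hy k I.
    move: hk'; rewrite /mball /= => hk'.
    by have := lt_trans hk hk'; rewrite ltxx.
  rewrite E0 outer_measure0 in cv.
  have e0' : (0%R%:E < e%:E)%E by rewrite lte_fin.
  have [N _ HN] := cv _ (open_ereal_lt' e0').
  exists N.+1%:R^-1; first by rewrite invr_gt0 ltr0n.
  move=> r rN; apply: le_lt_trans (HN N (leqnn N)).
  apply: muS => y [hy yx]; split => //; move: hy; rewrite /mball /= => hy.
  exact: lt_le_trans hy rN.
have mxE : mu [set x] = (fine (mu [set x]))%:E by apply: finE.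
set m := fine (mu [set x]) in mxE.
have iii_ii : (0 < mu [set x])%E -> mu_open rho mu [set x].
  move=> Hx y ->; split => //; exists [set x]; split => //; first exact: single_borel.
  have m0 : 0 < m by rewrite -lte_fin -mxE.
  apply/cvgrPdist_lt => e e0.
  have [d d0 Hd] := key (e * m) (mulr_gt0 e0 m0).
  exists d => //= t /= + t0; rewrite sub0r normrN gtr0_norm // => td.
  have h1 := Hd t (ltW td).
  have aE : mu (mball rho x t `\` [set x]) = (fine (mu (mball rho x t `\` [set x])))%:E.
    by apply: finE => //; apply: lt_trans h1 (ltry _).
  move: h1; rewrite aE lte_fin => h1.
  have h2 : m <= mb x t.
    by rewrite -lee_fin -mxE -mbE //; apply: muS => z ->; apply: xball.
  have a0 : 0 <= fine (mu (mball rho x t `\` [set x])) by rewrite -lee_fin -aE.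
  rewrite /= -/(mb x t) sub0r normrN ger0_norm; last first.
    by apply: divr_ge0 => //; apply: ltW (mbpos x t t0).
  rewrite ltr_pdivrMr ?mbpos //.
  by apply: lt_le_trans h1 _; rewrite ler_pM2l.
have ii_iii : mu_open rho mu [set x] -> (0 < mu [set x])%E.
  move=> H; have [_ [B [_ BS Hcv]]] := H x erefl.
  rewrite lt_neqAle mu0 andbT; apply/negP => /eqP hx0.
  have hB : mu B = 0%E.
    by apply/eqP; rewrite eq_le mu0 andbT hx0; apply: muS.
  move/cvgrPdist_lt: Hcv => /(_ 1 ltr01) /near_right_ex [d d0 Hd].
  have t0 : 0 < d / 2 by lra.
  have := Hd (d / 2) t0 (ltac:(lra)).
  have -> : mu (mball rho x (d / 2) `\` B) = mu (mball rho x (d / 2)).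
    apply/eqP; rewrite eq_le; apply/andP; split; first by apply: muS => z [].
    apply: (@le_trans _ _ (mu ((mball rho x (d / 2) `\` B) `|` B))).
      apply: muS => z hz; case: (pselect (B z)) => hBz; [by right | by left].
    by apply: le_trans (outer_measureU2 _ _ _) _; rewrite hB adde0.
  by rewrite -/(mb x (d / 2)) divff ?gt_eqF ?mbpos // sub0r normrN normr1 ltxx.
have i_iii : metric_open rho [set x] -> (0 < mu [set x])%E.
  move=> /(_ x erefl) [r r0 hr].
  have [h _ _] := hb x r r0; apply: lt_le_trans h _; exact: muS.
have iii_i : (0 < mu [set x])%E -> metric_open rho [set x].
  move=> Hx y0 ->.
  have m0 : 0 < m by rewrite -lte_fin -mxE.
  apply: contrapT => Hn.
  have [d d0 Hd] := key (m / (K * K)) (divr_gt0 m0 (mulr_gt0 K0 K0)).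
  have [y [hy yx]] : exists y, mball rho x (d / 2) y /\ y <> x.
    apply: contrapT => hne; apply: Hn; exists (d / 2); first by lra.
    move=> z hz; apply: contrapT => zx; apply: hne; by exists z.
  have δ0 : 0 < rho x y := rgt0 x y (fun h => yx (esym h)).
  move: hy; rewrite /mball /= => hy.
  have sub : mball rho y (rho x y / 2) `<=` mball rho x d `\` [set x].
    move=> z; rewrite /mball /= => hz; split.
      by have := tri x y z; lra.
    by move=> zx; subst z; rewrite -rsym in hz; lra.
  have h1 := le_lt_trans (muS _ _ sub) (Hd d (lexx d)).
  rewrite mbE ?lte_fin in h1; last by lra.
  have h2 : m <= mb y (2 * rho x y).
    rewrite -lee_fin -mxE -mbE; last by lra.
    by apply: muS => z ->; rewrite /mball /= -rsym; lra.
  have h3 := mbdbl y (rho x y) δ0.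
  have h4 := mbdbl y (rho x y / 2) (ltac:(lra)).
  have e2 : 2 * (rho x y / 2) = rho x y by lra.
  rewrite e2 in h4.
  have hK : mb y (rho x y / 2) * (K * K) < m by rewrite -ltr_pdivlMr ?mulr_gt0.
  have h5 : K * mb y (rho x y) <= K * (K * mb y (rho x y / 2)) by rewrite ler_pM2l.
  have e3 : K * (K * mb y (rho x y / 2)) = mb y (rho x y / 2) * (K * K) by ring.
  lra.
split; split.
- by move=> h; apply: iii_ii; apply: i_iii.
- by move=> h; apply: iii_i; apply: ii_iii.
- exact: ii_iii.
- exact: iii_ii.
Qed.
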